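(* Every digraph $D$ with minimum dicut size $2$ contains $2$ arc-disjoint dijoins.
   Context: Digraphs are finite and loopless; parallel arcs allowed. A dicut is $\delta^+_D(U)$ (arcs leaving $U$) with $\emptyset\neq U\subsetneq V$ and no arc entering $U$; a dijoin is an arc set meeting every dicut; ''$D$ has minimum dicut size $\tau$'' means $D$ has at least one dicut and the minimum number of arcs in a dicut is $\tau$. *)

(* Defs.v *)
From mathcomp Require Import all_boot.
Set Implicit Arguments. Unset Strict Implicit. Unset Printing Implicit Defensive.

(* A finite loopless digraph with possibly parallel arcs: vertex type V,
   arc type A (both finite), tail and head maps, no loops. *)
Definition loopless (V A : finType) (tl hd : A -> V) : Prop :=
  forall a : A, tl a != hd a.

Definition out_arcs (V A : finType) (tl hd : A -> V) (U : {set V}) : {set A} :=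
  [set a | (tl a \in U) && (hd a \notin U)].

Definition in_arcs (V A : finType) (tl hd : A -> V) (U : {set V}) : {set A} :=
  [set a | (tl a \notin U) && (hd a \in U)].

Definition dicut_shore (V A : finType) (tl hd : A -> V) (U : {set V}) : Prop :=
  U != set0 /\ U != setT /\ in_arcs tl hd U = set0.

Definition is_dicut (V A : finType) (tl hd : A -> V) (C : {set A}) : Prop :=
  exists U : {set V}, dicut_shore tl hd U /\ C = out_arcs tl hd U.

Definition is_dijoin (V A : finType) (tl hd : A -> V) (J : {set A}) : Prop :=
  forall C : {set A}, is_dicut tl hd C -> J :&: C != set0.

Definition min_dicut_size (V A : finType) (tl hd : A -> V) (tau : nat) : Prop :=
  (exists C, is_dicut tl hd C /\ #|C| = tau) /\
  (forall C, is_dicut tl hd C -> tau <= #|C|).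

(* Main.v *)
Require Import Defs.
From mathcomp Require Import all_boot.
Set Implicit Arguments. Unset Strict Implicit. Unset Printing Implicit Defensive.

Lemma cross2 (V A : finType) (tl hd : A -> V) :
  (forall C, is_dicut tl hd C -> 2 <= #|C|) ->
  forall X : {set V}, X != set0 -> X != setT ->
  exists a1 a2, [/\ a1 != a2, (tl a1 \in X) != (hd a1 \in X)
                 & (tl a2 \in X) != (hd a2 \in X)].
Proof.
move=> H X X0 XT.
case: (set_0Vmem (in_arcs tl hd X)) => [In0 | [b Hb]].
  have: 1 < #|out_arcs tl hd X| by apply: H; exists X.
  case/card_gt1P => a1 [a2 [H1 H2 H12]]; exists a1, a2.
  by rewrite !inE in H1 H2; case/andP: H1 => -> /negbTE ->; case/andP: H2 => -> /negbTE ->.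
case: (set_0Vmem (out_arcs tl hd X)) => [Out0 | [c Hc]].
  have: 1 < #|out_arcs tl hd (~: X)|.
    apply: H; exists (~: X); split => //; split; [|split].
    - apply/negP => /eqP E; move/negP: XT; apply; apply/eqP.
      by rewrite -(setCK X) E setC0.
    - apply/negP => /eqP E; move/negP: X0; apply; apply/eqP.
      by rewrite -(setCK X) E setCT.
    - apply/setP => a; move/setP: Out0 => /(_ a); rewrite !inE negbK.
      by rewrite andbC.
  case/card_gt1P => a1 [a2 [H1 H2 H12]]; exists a1, a2.
  rewrite !inE !negbK in H1 H2.
  by case/andP: H1 => /negbTE -> ->; case/andP: H2 => /negbTE -> ->.
exists c, b; rewrite !inE in Hb Hc.
case/andP: Hb => /negbTE Hb1 Hb2; case/andP: Hc => Hc1 /negbTE Hc2.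
rewrite Hb1 Hb2 Hc1 Hc2; split => //.
by apply/eqP => E; rewrite E Hb1 in Hc1.
Qed.

Lemma cross_exit (T : finType) (e : rel T) (U : {set T}) u v :
  connect e u v -> u \notin U -> v \in U ->
  exists u' v', [/\ e u' v', u' \notin U & v' \in U].
Proof.
case/connectP => p; elim: p u => [|z p IH] u /=.
  by move=> _ -> /negbTE ->.
case/andP => Huz Hp Hv Hu Hv'.
case Hz: (z \in U); first by exists u, z.
by apply: (IH z) => //; rewrite Hz.
Qed.

Definition srel (V A : finType) (tl hd : A -> V) (W : {set V}) (J : {set A}) : rel V :=
  fun u v => [exists a, [&& tl a \in W, hd a \in W &
     if a \in J then (tl a == u) && (hd a == v) else (hd a == u) && (tl a == v)]].

Definition inv (V A : finType) (tl hd : A -> V) (W : {set V}) (J : {set A}) :=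
  forall u v, u \in W -> v \in W -> connect (srel tl hd W J) u v.

Lemma final (V A : finType) (tl hd : A -> V) (J : {set A}) :
  inv tl hd setT J -> is_dijoin tl hd J /\ is_dijoin tl hd (~: J).
Proof.
move=> HJ; split => C [U [[U0 [UT In0]] ->]].
- have [v Hv] := set0Pn U U0.
  have [u Hu] : exists u, u \notin U.
    apply/existsP; apply: contraR UT => /existsPn H; apply/eqP/setP => x.
    by have := H x; rewrite negbK inE => ->.
  have := cross_exit (HJ v u (in_setT _) (in_setT _)) (U := ~: U).
  rewrite !inE negbK => /(_ Hv Hu) [u' [v' [/existsP [a /and3P [_ _ Ha]] Hu' Hv']]].
  apply/set0Pn; exists a; rewrite !inE.
  rewrite !inE ?negbK in Hu' Hv'.
  case: ifP Ha => aJ /andP [/eqP E1 /eqP E2]; subst; rewrite /= ?Hu' ?Hv' //.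
  have : a \in in_arcs tl hd U by rewrite !inE Hu' Hv'.
  by rewrite In0 inE.
- have [v Hv] := set0Pn U U0.
  have [u Hu] : exists u, u \notin U.
    apply/existsP; apply: contraR UT => /existsPn H; apply/eqP/setP => x.
    by have := H x; rewrite negbK inE => ->.
  have := cross_exit (HJ u v (in_setT _) (in_setT _)) (U := U).
  move=> /(_ Hu Hv) [u' [v' [/existsP [a /and3P [_ _ Ha]] Hu' Hv']]].
  apply/set0Pn; exists a; rewrite !inE.
  case: ifP Ha => aJ /andP [/eqP E1 /eqP E2]; subst; rewrite /= ?Hu' ?Hv' //.
    have : a \in in_arcs tl hd U by rewrite !inE Hu' Hv'.
    by rewrite In0 inE.
Qed.

Definition Rix (T : eqType) (t : seq T) : rel T :=
  fun u v => [&& u \in t, v \in t & index u t < index v t].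

Lemma index_path (T : eqType) (s pre : seq T) (x : T) :
  uniq (pre ++ x :: s) -> path (Rix (pre ++ x :: s)) x s.
Proof.
elim: s pre x => [|y s IH] pre x //= U.
apply/andP; split; last first.
  by have := IH (rcons pre x) y; rewrite cat_rcons; apply.
have := U; rewrite cat_uniq => /and3P [_ Hpre /= /andP [xys _]].
move: Hpre; rewrite /= negb_or => /andP [xpre /norP [ypre _]].
rewrite inE negb_or in xys; case/andP: xys => xy _.
rewrite /Rix !mem_cat !inE !eqxx !orbT /= !index_cat (negbTE xpre) (negbTE ypre) /=.
have yx : (y == x) = false by rewrite eq_sym (negbTE xy).
by rewrite !eqxx (negbTE xy) addn0 addn1.
Qed.

Lemma path_notin (T : eqType) (g : rel T) (P : pred T) x s :
  (forall u v, g u v -> P v) -> path g x s -> all P s.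
Proof.
move=> H; elim: s x => [|y s IH] x //= /andP [Hxy Hp].
by rewrite (H _ _ Hxy) (IH y Hp).
Qed.

Lemma path_to_last (T : finType) (e : rel T) x p :
  path e x p -> forall v, v \in x :: p -> connect e v (last x p).
Proof.
elim: p x => [|z p IH] x /=.
  by move=> _ v; rewrite inE => /eqP ->.
case/andP => Hxz Hp v; rewrite inE => /orP [/eqP -> |Hv].
  exact: connect_trans (connect1 Hxz) (IH z Hp z (mem_head _ _)).
exact: IH.
Qed.

Lemma ear (V A : finType) (tl hd : A -> V)
  (Hc : forall X : {set V}, X != set0 -> X != setT ->
     exists a1 a2, [/\ a1 != a2, (tl a1 \in X) != (hd a1 \in X)
                 & (tl a2 \in X) != (hd a2 \in X)])
  (W : {set V}) (J : {set A}) :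
  W != set0 -> W != setT -> inv tl hd W J ->
  exists (W' : {set V}) (J' : {set A}), W \proper W' /\ inv tl hd W' J'.
Proof.
move=> W0 WT HJ.
have [a0 [_ [_ Ha0 _]]] := Hc W W0 WT.
have [x [w [Hx Hw Hxw]]] : exists x w, [/\ x \in W, w \notin W &
    ((tl a0 == x) && (hd a0 == w)) || ((hd a0 == x) && (tl a0 == w))].
  case Htl: (tl a0 \in W); rewrite Htl in Ha0.
    have hW : (hd a0 \in W) = false by move: Ha0; case: (hd a0 \in W).
    by exists (tl a0), (hd a0); rewrite Htl hW !eqxx.
  have hW : (hd a0 \in W) = true by move: Ha0; case: (hd a0 \in W).
  by exists (hd a0), (tl a0); rewrite Htl hW !eqxx orbT.
pose g : rel V := fun u v => [&& u \notin W, v \notin W & [exists e,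
   ((tl e == u) && (hd e == v)) || ((tl e == v) && (hd e == u))]].
pose R := [set v | (v \notin W) && connect g w v].
have R0 : R != set0 by apply/set0Pn; exists w; rewrite inE Hw connect0.
have RT : R != setT.
  by apply/negP => /eqP E; have := in_setT x; rewrite -E inE Hx.
have closeR : forall e r z, r \in R -> z \notin R ->
    ((tl e == r) && (hd e == z)) || ((tl e == z) && (hd e == r)) -> z \in W.
  move=> e r z; rewrite !inE => /andP [rW cr] zR He; apply: contraR zR => zW.
  rewrite zW /=; apply: connect_trans cr (connect1 _).
  by rewrite /g rW zW /=; apply/existsP; exists e.
have [b1 [b2 [Hb12 Hb1 Hb2]]] := Hc R R0 RT.
have [b [Hba0 Hb]] : exists b, b != a0 /\ (tl b \in R) != (hd b \in R).
  case E: (b1 == a0); last by exists b1; rewrite E.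
  by exists b2; split => //; move/eqP: E => <-; rewrite eq_sym.
have [r [y [Hr Hy Hbry]]] : exists r y, [/\ r \in R, y \in W &
    ((tl b == r) && (hd b == y)) || ((hd b == r) && (tl b == y))].
  case Htl: (tl b \in R); rewrite Htl in Hb.
    have hR : (hd b \in R) = false by move: Hb; case: (hd b \in R).
    exists (tl b), (hd b); rewrite !eqxx; split => //.
    by apply: (closeR b (tl b)) => //; rewrite ?hR ?eqxx.
  have hR : (hd b \in R) = true by move: Hb; case: (hd b \in R).
  exists (hd b), (tl b); rewrite !eqxx orbT; split => //.
  by apply: (closeR b (hd b)) => //; rewrite ?Htl ?eqxx ?orbT.
have := Hr; rewrite inE => /andP [rW /connectP [p Hp Er]].
case: (shortenP Hp) Er => p' Hp' Up' _ Er.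
pose s := w :: p'.
have sW : forall v, v \in s -> v \notin W.
  move=> v; rewrite inE => /orP [/eqP -> //|].
  have : all (fun v => v \notin W) p'.
    by apply: (@path_notin _ g (fun z => z \notin W) w p' _ Hp') => u z /and3P [].
  by move/allP; apply.
pose W' := W :|: [set v in s].
pose J' := [set e | if (tl e \in W) && (hd e \in W) then e \in J
   else if e == a0 then tl e \in W
   else (tl e \notin W) && ((hd e \in W) || (index (tl e) s < index (hd e) s))].
pose e' := srel tl hd W' J'.
have mono : subrel (srel tl hd W J) e'.
  move=> u v /existsP [a /and3P [ta ha Ha]]; apply/existsP; exists a.
  by rewrite !inE ta ha.
have sW' : forall v, v \in s -> v \in W' by move=> v Hv; rewrite inE; apply/orP; right; rewrite inE.
have xW' : x \in W' by rewrite inE Hx.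
have yW' : y \in W' by rewrite inE Hy.
have ws : w \in s := mem_head _ _.
have rs : r \in s by rewrite Er; apply: mem_last.
have e'xw : e' x w.
  apply/existsP; exists a0.
  have a0J : (a0 \in J') = (tl a0 \in W).
    rewrite inE; case: ifP => [/andP [H1 H2]|_]; last by rewrite eqxx.
    by case/orP: Hxw => /andP [/eqP E1 /eqP E2]; move: H1 H2; rewrite E1 E2 (negbTE Hw).
  rewrite a0J.
  case/orP: Hxw => /andP [/eqP E1 /eqP E2]; rewrite E1 E2 xW' (sW' _ ws) ?Hx ?(negbTE Hw) /=.
    by rewrite !eqxx.
  by rewrite !eqxx.
have J'E : forall e, (e \in J') = if (tl e \in W) && (hd e \in W) then e \in J
   else if e == a0 then tl e \in W
   else (tl e \notin W) && ((hd e \in W) || (index (tl e) s < index (hd e) s)).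
  by move=> e; rewrite /J' inE.
have e'p : path e' w p'.
  have Ip : path (Rix s) w p' by have := @index_path _ p' [::] w Up'.
  have : path [rel u v | g u v && Rix s u v] w p' by rewrite path_relI Hp' Ip.
  apply: sub_path => u v /andP [/and3P [uW vW /existsP [e He]] /and3P [us vs Iuv]].
  apply/existsP; exists e.
  have ea0 : (e == a0) = false.
    apply/negP => /eqP E; subst e.
    have : (tl a0 \in W) || (hd a0 \in W).
      by case/orP: Hxw => /andP [/eqP -> /eqP ->]; rewrite Hx ?orbT.
    by case/orP: He => /andP [/eqP -> /eqP ->]; rewrite (negbTE uW) (negbTE vW).
  case/orP: He => /andP [/eqP E1 /eqP E2]; rewrite J'E E1 E2 (sW' _ us) (sW' _ vs).
    by rewrite (negbTE uW) ea0 Iuv orbT !eqxx.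
  by rewrite (negbTE uW) (negbTE vW) ea0 ltnNge (ltnW Iuv) !eqxx.
have e'ry : e' r y.
  apply/existsP; exists b.
  case/orP: Hbry => /andP [/eqP E1 /eqP E2]; rewrite J'E E1 E2 (sW' _ rs) yW' /=.
    by rewrite (negbTE rW) (negbTE Hba0) Hy !eqxx.
  by rewrite (negbTE rW) andbF (negbTE Hba0) Hy /= !eqxx.
have old : forall u v, connect (srel tl hd W J) u v -> connect e' u v.
  by apply: connect_sub => u v H; apply: connect1; apply: mono.
have cxs : forall v, v \in s -> connect e' x v.
  by move=> v Hv; apply: connect_trans (connect1 e'xw) (path_connect e'p Hv).
have csy : forall v, v \in s -> connect e' v y.
  move=> v Hv; apply: connect_trans (path_to_last e'p Hv) _.
  by rewrite -Er; apply: connect1.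
exists W', J'; split.
  apply/properP; split; first by apply/subsetP => z Hz; rewrite inE Hz.
  by exists w; [apply: sW' | ].
move=> u v; rewrite !inE => Hu Hv.
have [u' [u'W cu]] : exists u', u' \in W /\ connect e' u u'.
  case/orP: Hu => Hu; first by exists u; rewrite connect0.
  by exists y; split => //; apply: csy.
have [v' [v'W cv]] : exists v', v' \in W /\ connect e' v' v.
  case/orP: Hv => Hv; first by exists v; rewrite connect0.
  by exists x; split => //; apply: cxs.
apply: connect_trans cu _; apply: connect_trans _ cv.
exact: old (HJ _ _ u'W v'W).
Qed.

From mathcomp Require Import zify.

Lemma grow (V A : finType) (tl hd : A -> V)
  (Hc : forall X : {set V}, X != set0 -> X != setT ->
     exists a1 a2, [/\ a1 != a2, (tl a1 \in X) != (hd a1 \in X)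
                 & (tl a2 \in X) != (hd a2 \in X)]) :
  forall n (W : {set V}) (J : {set A}), #|~: W| <= n -> W != set0 ->
  inv tl hd W J -> exists J' : {set A}, inv tl hd setT J'.
Proof.
elim=> [|n IH] W J Hn W0 HJ.
  exists J; suff -> : setT = W by [].
  apply/setP => z; rewrite inE; symmetry.
  apply: contraT => zW; move: Hn; rewrite leqn0 => /eqP /cards0_eq /setP /(_ z).
  by rewrite !inE zW.
case WT: (W == setT); first by exists J; move/eqP: WT => <-.
have [W' [J' [Hpr HJ']]] := ear Hc W0 (negbT WT) HJ.
apply: (IH W' J') => //.
  have := proper_card Hpr; have := cardsC W; have := cardsC W'; move: Hn.
  lia.
apply/set0Pn; have [z Hz] := set0Pn _ W0; exists z.
by move/properP: Hpr => [/subsetP /(_ z Hz)].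
Qed.

Theorem corollary1 (V A : finType) (tl hd : A -> V) :
  loopless tl hd ->
  min_dicut_size tl hd 2 ->
  exists J1 J2 : {set A},
    [disjoint J1 & J2] /\ is_dijoin tl hd J1 /\ is_dijoin tl hd J2.
Proof.
move=> _ [[C [[U [[U0 _] _]] _]] Hmin].
have Hc := cross2 Hmin.
have [v0 Hv0] := set0Pn _ U0.
have Hi : inv tl hd [set v0] set0.
  by move=> u v; rewrite !inE => /eqP -> /eqP ->; apply: connect0.
have W0 : [set v0] != set0 by apply/set0Pn; exists v0; rewrite inE.
have [J HJ] := grow Hc (leqnn _) W0 Hi.
have [D1 D2] := final HJ.
exists J, (~: J); split => //.
by rewrite -setI_eq0 setICr.
Qed.
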